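(* Let $H$ be a self-adjoint operator on a finite-dimensional Hilbert space $\mathcal{H}$ which is not the zero operator, and let $T:\mathcal{H}\rightarrow\mathcal{H}$ be an antiunitary bijection. Suppose there exists an eigenvector $\psi$ of $H$ such that (1) $T\psi \neq e^{i\theta}\psi$ for every complex unit $e^{i\theta}$, and (2) every eigenvector of $H$ orthogonal to $\psi$ has an eigenvalue different from that of $\psi$. Then $[T,H]\neq 0$, i.e. $TH\neq HT$.
   Context: An antiunitary operator $T$ is an antilinear bijection ($T(a\psi+b\phi)=a^*T\psi+b^*T\phi$) satisfying $\langle T\psi, T\phi\rangle = \langle \psi,\phi\rangle^*$ for all $\psi,\phi$. *)

(* Defs.v *)
(* The finite-dimensional complex Hilbert space is modelled as
   C^n = 'cV[C]_n over a numClosedFieldType C (e.g. algC, or complex R), with the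
   standard inner product, antilinear in the first argument. *)
From HB Require Import structures.
From mathcomp Require Import all_boot all_order all_algebra.
Set Implicit Arguments. Unset Strict Implicit. Unset Printing Implicit Defensive.
Import Order.TTheory GRing.Theory Num.Theory.
Local Open Scope ring_scope.

Section Hilbert.
Variables (C : numClosedFieldType) (n : nat).

Definition inner (u v : 'cV[C]_n) : C := \sum_(i < n) (u i 0)^* * v i 0.

Definition adjoint (A : 'M[C]_n) : 'M[C]_n := map_mx Num.conj A^T.

Definition self_adjoint (A : 'M[C]_n) : Prop := adjoint A = A.

Definition antilinear (T : 'cV[C]_n -> 'cV[C]_n) : Prop :=
  forall (a b : C) (u v : 'cV[C]_n),
    T (a *: u + b *: v) = a^* *: T u + b^* *: T v.

Definition antiunitary (T : 'cV[C]_n -> 'cV[C]_n) : Prop :=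
  [/\ antilinear T, bijective T &
      forall u v, inner (T u) (T v) = (inner u v)^*].

Definition eigenvector_with (A : 'M[C]_n) (psi : 'cV[C]_n) (lambda : C) : Prop :=
  psi != 0 /\ A *m psi = lambda *: psi.

End Hilbert.

(* Main.v *)
Require Import Defs.
From HB Require Import structures.
From mathcomp Require Import all_boot all_order all_algebra.
Import Order.TTheory GRing.Theory Num.Theory.
Local Open Scope ring_scope.

Section Aux.
Variables (C : numClosedFieldType) (n : nat).
Implicit Types u v w : 'cV[C]_n.

Lemma innerE u v : inner u v = ((map_mx Num.conj u)^T *m v) 0 0.
Proof. by rewrite /inner !mxE; apply: eq_bigr => i _; rewrite !mxE. Qed.

Lemma innerDr u v w : inner u (v + w) = inner u v + inner u w.
Proof. by rewrite !innerE mulmxDr mxE. Qed.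

Lemma innerZr u v a : inner u (a *: v) = a * inner u v.
Proof. by rewrite !innerE -scalemxAr mxE. Qed.

Lemma innerNr u v : inner u (- v) = - inner u v.
Proof. by rewrite -scaleN1r innerZr mulN1r. Qed.

Lemma innerBr u v w : inner u (v - w) = inner u v - inner u w.
Proof. by rewrite innerDr innerNr. Qed.

Lemma innerC u v : inner v u = (inner u v)^*.
Proof.
rewrite /inner rmorph_sum; apply: eq_bigr => i _.
by rewrite rmorphM /= conjCK mulrC.
Qed.

Lemma innerZl u v a : inner (a *: u) v = a^* * inner u v.
Proof. by rewrite innerC innerZr rmorphM /= -innerC. Qed.

Lemma inner_self_eq0 u : inner u u = 0 -> u = 0.
Proof.
move=> h; apply/matrixP => i j; rewrite (ord1 j) mxE.
have : \sum_(k < n) `|u k 0| ^+ 2 = 0.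
  rewrite -[RHS]h /inner; apply: eq_bigr => k _; by rewrite normCK mulrC.
move/eqP; rewrite psumr_eq0; last by move=> k _; rewrite exprn_ge0.
move/allP/(_ i (mem_index_enum _)); rewrite /= sqrf_eq0 normr_eq0.
by move/eqP.
Qed.

Lemma inner_adj (H : 'M[C]_n) u v : self_adjoint H ->
  inner u (H *m v) = inner (H *m u) v.
Proof.
move=> sa; rewrite !innerE map_mxM trmx_mul -mulmxA.
have -> : (map_mx Num.conj H)^T = H.
  by rewrite -{2}sa /adjoint; apply/matrixP => i j; rewrite !mxE.
by [].
Qed.

End Aux.

Theorem proposition2 (C : numClosedFieldType) (n : nat)
  (H : 'M[C]_n) (T : 'cV[C]_n -> 'cV[C]_n) :
  self_adjoint H -> H != 0 -> antiunitary T ->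
  (exists (psi : 'cV[C]_n) (lambda : C),
     [/\ eigenvector_with H psi lambda,
         (forall c : C, `|c| = 1 -> T psi != c *: psi) &
         (forall (phi : 'cV[C]_n) (mu : C),
            eigenvector_with H phi mu -> inner psi phi = 0 -> mu != lambda)]) ->
  (fun v => T (H *m v)) <> (fun v => H *m T v).
Proof.
move=> sa _ [al _ un] [psi [l [[psi0 Hpsi] hT horth]]] comm.
have cm : T (H *m psi) = H *m T psi by move: comm => /(congr1 (fun f => f psi)).
set p := inner psi psi.
have p0 : p != 0 by apply: contra psi0 => /eqP/inner_self_eq0 ->.
have lreal : l^* = l.
  have := @inner_adj _ _ H psi psi sa; rewrite Hpsi innerZr innerZl -/p => e.
  by apply/esym/(mulIf p0).
have Tl : T (l *: psi) = l^* *: T psi.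
  have := al l 0 psi 0; rewrite !scale0r !addr0 => ->.
  by rewrite conjC0 scale0r addr0.
rewrite Hpsi Tl lreal in cm.
set c := inner psi (T psi) / p.
set phi := T psi - c *: psi.
have orth : inner psi phi = 0.
  by rewrite /phi innerBr innerZr /c -/p mulfVK // subrr.
have Hphi : H *m phi = l *: phi.
  by rewrite /phi mulmxBr -scalemxAr Hpsi -cm scalerBr !scalerA mulrC.
have phi0 : phi = 0.
  apply/eqP; apply: contraT => nz.
  by have := horth phi l (conj nz Hphi) orth; rewrite eqxx.
have Tc : T psi = c *: psi by apply/eqP; rewrite -subr_eq0 -/phi phi0.
have preal : p^* = p by rewrite /p -innerC.
have := un psi psi; rewrite Tc innerZl innerZr -/p preal mulrA.
rewrite -{2}(mul1r p) => /(mulIf p0) cc.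
have n1 : `|c| = 1.
  have : `|c| ^+ 2 = 1 by rewrite normCK mulrC cc.
  move/eqP; rewrite sqrf_eq1 => /orP [/eqP //|/eqP h].
  by have := normr_ge0 c; rewrite h oppr_ge0 ler10.
by have := hT c n1; rewrite Tc eqxx.
Qed.
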